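(* Let $G$ be a perfect matching on $n=pq$ vertices $u_iw_j$ ($1\le i\le p$, $1\le j\le q$; $n$ even). Then $\Delta(G)=\Delta(G^{\Gamma_B})$ if and only if $G^{\Gamma_B}$ is a perfect matching. Moreover, if this holds, then the subgraph $G_2$ of $G$ consisting of its entangled edges and the subgraph $G_4$ of $G^{\Gamma_B}$ consisting of its entangled edges have the same set of non-isolated vertices, i.e. both are perfect entangling matchings on the same vertex subset. In particular, a perfect entangling matching $G$ on these vertices satisfies $\Delta(G)=\Delta(G^{\Gamma_B})$ iff $G^{\Gamma_B}$ is also a perfect entangling matching.
   Context: A perfect matching is a simple graph in which every vertex lies in exactly one edge. An edge $\{u_iw_j,u_{i'}w_{j'}\}$ is entangled if $i\ne i'$ and $j\ne j'$, and unentangled otherwise. A perfect entangling matching (on a vertex set) is a perfect matching all of whose edges are entangled. $\Delta(G)$ denotes the diagonal degree matrix. The partial transpose $G^{\Gamma_B}$ has the same vertex set, and $\{u_iw_j,u_kw_l\}$ is an edge of $G^{\Gamma_B}$ iff $\{u_iw_l,u_kw_j\}$ is an edge of $G$. *)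

(* Defs.v *)
From mathcomp Require Import all_boot.
Set Implicit Arguments. Unset Strict Implicit. Unset Printing Implicit Defensive.

(* Vertices u_i w_j are pairs (i, j) : 'I_p * 'I_q.
   A simple graph on them is a symmetric irreflexive relation. *)
Section Defs.
Variables p q : nat.
Definition vtx := ('I_p * 'I_q)%type.

Definition simple_graph (e : rel vtx) : Prop :=
  symmetric e /\ irreflexive e.

Definition nbhd (e : rel vtx) (x : vtx) : {set vtx} := [set y | e x y].
Definition deg (e : rel vtx) (x : vtx) : nat := #|nbhd e x|.

(* Delta(G): the diagonal degree matrix, represented by its diagonal *)
Definition Delta (e : rel vtx) : {ffun vtx -> nat} := [ffun x => deg e x].

Definition perfect_matching (e : rel vtx) : Prop :=
  forall x, deg e x = 1%N.

Definition entangled (x y : vtx) : bool := (x.1 != y.1) && (x.2 != y.2).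

Definition perfect_entangling_matching (e : rel vtx) : Prop :=
  perfect_matching e /\ (forall x y, e x y -> entangled x y).

Definition perfect_entangling_matching_on (e : rel vtx) (S : {set vtx}) : Prop :=
  [/\ forall x, x \in S -> deg e x = 1%N,
      forall x, x \notin S -> nbhd e x = set0
    & forall x y, e x y -> entangled x y].

(* partial transpose: {u_i w_j, u_k w_l} is an edge of G^Gamma_B iff
   {u_i w_l, u_k w_j} is an edge of G (and the two endpoints are distinct) *)
Definition ptrans (e : rel vtx) : rel vtx :=
  fun x y => (x != y) && e (x.1, y.2) (y.1, x.2).

Definition entangled_part (e : rel vtx) : rel vtx :=
  fun x y => e x y && entangled x y.
End Defs.

(* Main.v *)
Require Import Defs.
From mathcomp Require Import all_boot.
Set Implicit Arguments. Unset Strict Implicit. Unset Printing Implicit Defensive.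

Section S.
Variables p q : nat.
Implicit Types (e : rel (vtx p q)) (x y z : vtx p q).

Lemma deg1P e x : deg e x = 1 -> exists w, forall y, e x y = (y == w).
Proof.
move=> H; have /cards1P [w Hw] : #|nbhd e x| == 1 by rewrite /deg in H; rewrite H.
exists w => y; move/setP: Hw => /(_ y); by rewrite !inE.
Qed.

Lemma key1 e x y : simple_graph e -> ptrans e x y -> ~~ entangled x y -> e x y.
Proof.
case=> sym _; case: x => a b; case: y => c d; rewrite /ptrans /entangled /=.
case/andP=> _ H; rewrite negb_and !negbK; case/orP=> /eqP E; subst.
- by rewrite sym.
- by [].
Qed.

Lemma key2 e x y : simple_graph e -> e x y -> ~~ entangled x y -> ptrans e x y.
Proof.
case=> sym irr; case: x => a b; case: y => c d; rewrite /ptrans /entangled /=.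
move=> H; rewrite negb_and !negbK; case/orP=> /eqP E; subst.
- apply/andP; split; last by rewrite sym.
  by apply/negP => /eqP E; rewrite E irr in H.
- apply/andP; split=> //.
  by apply/negP => /eqP E; rewrite E irr in H.
Qed.

Lemma pem_gen (G : rel (vtx p q)) : perfect_matching G ->
  perfect_entangling_matching_on (entangled_part G)
    [set x | [exists y, entangled_part G x y]].
Proof.
move=> pm; split.
- move=> x; rewrite inE => /existsP [y /andP [Gxy Exy]].
  have [w Hw] := deg1P (pm x).
  rewrite Hw in Gxy; move/eqP: Gxy => Ey; subst y.
  rewrite /deg (_ : nbhd _ x = [set w]) ?cards1 //.
  apply/setP => z; rewrite !inE /entangled_part Hw.
  by case: eqP => // ->.
- move=> x; rewrite inE => /existsPn H; apply/setP => z; rewrite !inE.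
  exact: negbTE (H z).
- by move=> x y /andP [].
Qed.
End S.

Theorem mainTheorem6 (p q : nat) (e : rel (vtx p q)) :
  simple_graph e -> perfect_matching e ->
  (Delta e = Delta (ptrans e) <-> perfect_matching (ptrans e)) /\
  (Delta e = Delta (ptrans e) ->
     exists S : {set vtx p q},
       perfect_entangling_matching_on (entangled_part e) S /\
       perfect_entangling_matching_on (entangled_part (ptrans e)) S) /\
  (perfect_entangling_matching e ->
     (Delta e = Delta (ptrans e) <-> perfect_entangling_matching (ptrans e))).
Proof.
move=> sg pm.
have P1 : Delta e = Delta (ptrans e) <-> perfect_matching (ptrans e).
  split.
  - move=> HD x; move/ffunP: HD => /(_ x); rewrite !ffunE => <-; exact: pm.
  - move=> pm' ; apply/ffunP => x; rewrite !ffunE; by rewrite pm pm'.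
split=> //; split.
- move/P1 => pm'.
  exists [set x | [exists y, entangled_part e x y]]; split; first exact: pem_gen.
  have -> : [set x | [exists y, entangled_part e x y]] =
            [set x | [exists y, entangled_part (ptrans e) x y]].
    apply/setP => x; rewrite !inE.
    have [m Hm] := deg1P (pm x); have [m' Hm'] := deg1P (pm' x).
    apply/existsP/existsP => -[y /andP [Gxy Exy]].
    + exists m'; rewrite /entangled_part Hm' eqxx /=.
      apply/negPn/negP => En; have := key1 sg _ En; rewrite Hm' eqxx => /(_ isT).
      rewrite Hm; move/eqP => E; rewrite Hm in Gxy; move/eqP: Gxy => E2.
      by rewrite E -E2 Exy in En.
    + exists m; rewrite /entangled_part Hm eqxx /=.
      apply/negPn/negP => En; have := key2 sg _ En; rewrite Hm eqxx => /(_ isT).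
      rewrite Hm'; move/eqP => E; rewrite Hm' in Gxy; move/eqP: Gxy => E2.
      by rewrite E -E2 Exy in En.
  exact: pem_gen.
- case=> pme ent; split.
  + move/P1 => pm'; split=> // x y H; apply/negPn/negP => En.
    by have := ent _ _ (key1 sg H En); rewrite (negbTE En).
  + by case=> /P1.
Qed.
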